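(* Let $n\ge 2$, let $G=P_n$ be a path all of whose edges have weight $p\in(0,1)$, and let $\alpha\in(0,1)$. Then $\operatorname{cptw}(G,\alpha)$ is the minimum value of $m$ for which \[\sum_{s=n-1}^{m}\binom{m}{s}p^s(1-p)^{m-s}\ \ge\ \alpha.\]
   Context: Let $G$ be a finite simple graph in which each edge $uv$ has a weight $w_{uv}\in(0,1)$. Weighted zero forcing: start with a set $B\subseteq V(G)$ of blue vertices, all other vertices white. In each round, simultaneously, for every blue vertex $u$ that has exactly one white neighbor $v$ (with respect to the coloring at the start of the round), $u$ attempts to force $v$, succeeding with probability $w_{uv}$, all attempts being independent; a white vertex becomes blue at the end of the round if at least one attempt on it succeeds. $B$ is a weighted zero forcing set of $G$ if this process can eventually color all of $V(G)$ blue (equivalently, $B$ is a zero forcing set of the underlying unweighted graph under the standard rule); $\operatorname{Z}(G)$ is the minimum size of such a set. $\operatorname{ptw}(G,B)$ is the random variable giving the round in which the last white vertex becomes blue ($0$ if $B=V(G)$). For $\alpha\in(0,1)$, $\operatorname{cptw}(G,B,\alpha)$ is the least $t\ge 0$ with $\Pr(\operatorname{ptw}(G,B)\le t)\ge\alpha$, and $\operatorname{cptw}(G,\alpha)$ is the minimum of $\operatorname{cptw}(G,B,\alpha)$ over weighted zero forcing sets $B$ with $|B|=\operatorname{Z}(G)$. *)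

(* Defs.v *)
From HB Require Import structures.
From mathcomp Require Import all_boot all_order all_algebra.
Set Implicit Arguments. Unset Strict Implicit. Unset Printing Implicit Defensive.
Import Order.TTheory GRing.Theory Num.Theory.
Local Open Scope ring_scope.

Section WZF.
Variables (R : realFieldType) (T : finType) (adj : rel T) (w : T -> T -> R).

Definition white_nbrs (S : {set T}) (u : T) : {set T} :=
  [set v | adj u v && (v \notin S)].

Definition forcers (S : {set T}) : {set T} :=
  [set u in S | #|white_nbrs S u| == 1%N].

(* blue set after a round in which exactly the forcers in A succeed *)
Definition after_round (S A : {set T}) : {set T} :=
  S :|: [set v | [exists u in A, v \in white_nbrs S u]].

(* probability that the coloring S becomes S' in one round: sum over the
   sets A of successful attempts (independent attempts, u succeeds with
   probability w u v where v is its unique white neighbour) *)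
Definition step_prob (S S' : {set T}) : R :=
  \sum_(A : {set T} | A \subset forcers S)
     (S' == after_round S A)%:R *
     ((\prod_(u in A) \prod_(v in white_nbrs S u) w u v) *
      (\prod_(u in forcers S :\: A) \prod_(v in white_nbrs S u) (1 - w u v))).

(* distribution of the blue set at the end of round t, starting from B *)
Fixpoint blue_dist (B : {set T}) (t : nat) (S' : {set T}) : R :=
  match t with
  | 0%N => (S' == B)%:R
  | t'.+1 => \sum_(S : {set T}) blue_dist B t' S * step_prob S S'
  end.

(* Pr(ptw(G,B) <= t) *)
Definition prob_ptw_le (B : {set T}) (t : nat) : R := blue_dist B t [set: T].

Definition zf_step (S : {set T}) : {set T} :=
  S :|: [set v | [exists u in S, white_nbrs S u == [set v]]].
Definition zf_closure (B : {set T}) : {set T} := iter #|T| zf_step B.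
Definition zero_forcing_set (B : {set T}) : bool := zf_closure B == [set: T].

Definition is_Z (k : nat) : Prop :=
  (exists B, zero_forcing_set B /\ #|B| = k) /\
  (forall B, zero_forcing_set B -> (k <= #|B|)%N).

Definition is_cptw_set (B : {set T}) (alpha : R) (t : nat) : Prop :=
  alpha <= prob_ptw_le B t /\ (forall t', (t' < t)%N -> prob_ptw_le B t' < alpha).

Definition is_cptw (alpha : R) (t : nat) : Prop :=
  (exists B, zero_forcing_set B /\ is_Z #|B| /\ is_cptw_set B alpha t) /\
  (forall B t', zero_forcing_set B -> is_Z #|B| -> is_cptw_set B alpha t' ->
     (t <= t')%N).

End WZF.

Definition path_adj (n : nat) : rel 'I_n :=
  fun i j => (i.+1 == j :> nat) || (j.+1 == i :> nat).

(* Main.v *)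
Require Import Defs.
From HB Require Import structures.
From mathcomp Require Import all_boot all_order all_algebra.
From mathcomp Require Import zify ring lra.
Import Order.TTheory GRing.Theory Num.Theory.
Local Open Scope ring_scope.

Module BinM.
Set Implicit Arguments. Unset Strict Implicit. Unset Printing Implicit Defensive.


Section Bin.
Variable R : realFieldType.
Variable p : R.
Definition bb (t s : nat) : R := 'C(t, s)%:R * p ^+ s * (1 - p) ^+ (t - s).
Definition tl (m t : nat) : R := \sum_(m <= s < t.+1) bb t s.

Lemma bb0 t : bb t.+1 0 = (1 - p) * bb t 0.
Proof. rewrite /bb !bin0 !subn0 exprS; ring. Qed.

Lemma bbS t s : bb t.+1 s.+1 = (1 - p) * bb t s.+1 + p * bb t s.
Proof.
rewrite /bb binS natrD subSS.
case: (ltnP s t) => H.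
  have -> : (t - s = (t - s.+1).+1)%N by lia.
  rewrite !exprS; ring.
rewrite (bin_small (n:=t) (m:=s.+1)) //.
rewrite exprS; ring.
Qed.

Lemma bb_big t s : (t < s)%N -> bb t s = 0.
Proof. by move=> H; rewrite /bb bin_small // mul0r mul0r. Qed.

Lemma sum_bb_full t N : (t < N)%N -> \sum_(0 <= s < N) bb t s = 1.
Proof.
move=> H.
rewrite (big_cat_nat _ (n:=t.+1)) //=.
have -> : \sum_(t.+1 <= s < N) bb t s = 0.
  rewrite big_nat_cond big1 // => i /andP [/andP [Hi _] _]; by rewrite bb_big.
rewrite addr0.
have := exprDn (1 - p) p t.
rewrite subrK expr1n big_mkord => ->.
apply: eq_bigr => i _; rewrite /bb -mulr_natl; ring.
Qed.

Lemma tl_mass m t : tl m t + \sum_(0 <= s < m) bb t s = 1.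
Proof.
rewrite /tl; case: (leqP m t.+1) => H.
  by rewrite addrC -big_cat_nat //= sum_bb_full.
by rewrite big_geq ?add0r ?sum_bb_full //; lia.
Qed.

Lemma sum_bb_step t m : \sum_(0 <= s < m.+1) bb t.+1 s =
   \sum_(0 <= s < m.+1) bb t s - p * bb t m.
Proof.
elim: m => [|m IH].
  by rewrite !big_nat1 bb0; ring.
rewrite big_nat_recr //= IH [in RHS]big_nat_recr //= bbS; ring.
Qed.

Lemma tl_step m t : tl m.+1 t.+1 = tl m.+1 t + p * bb t m.
Proof.
have h1 := tl_mass m.+1 t.+1. have h2 := tl_mass m.+1 t.
rewrite sum_bb_step in h1.
have -> : tl m.+1 t.+1 = 1 - (\sum_(0 <= s < m.+1) bb t s - p * bb t m) by rewrite -h1; ring.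
rewrite -h2; ring.
Qed.

End Bin.

End BinM.
Import BinM.


Section Chain.
Variable R : realFieldType.
Variable p : R.
Variable n : nat.
Variable d : 'I_n.+1 -> nat.
Variable e : nat -> 'I_n.+1.
Hypothesis hd : forall i, (d i <= n)%N.
Hypothesis he : forall k, (k <= n)%N -> d (e k) = k.
Hypothesis hed : forall i, e (d i) = i.
Hypothesis hadj : forall i j, @path_adj n.+1 i j = ((d i).+1 == d j) || ((d j).+1 == d i).

Definition SS (k : nat) : {set 'I_n.+1} := [set i | (d i <= k)%N].

Lemma SS_inj j k : (j <= n)%N -> (k <= n)%N -> (SS j == SS k) = (j == k).
Proof.
move=> hj hk; apply/eqP/eqP => [E|->//].
have h1 : e j \in SS k by rewrite -E inE he.
have h2 : e k \in SS j by rewrite E inE he.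
move: h1 h2; rewrite !inE !he //; lia.
Qed.

Lemma SS_top k : (n <= k)%N -> SS k = setT.
Proof. move=> H; apply/setP => i; rewrite !inE; have := hd i; lia. Qed.

Lemma white_SS k u : (d u <= k)%N ->
  white_nbrs (@path_adj n.+1) (SS k) u = [set j | (d u == k) && (d j == k.+1)].
Proof.
move=> H; apply/setP => j; rewrite !inE hadj; lia.
Qed.

Lemma succ_set k : (k < n)%N -> [set j | d j == k.+1] = [set e k.+1].
Proof.
move=> H; apply/setP => j; rewrite !inE; apply/eqP/eqP => [<-|->]; last by rewrite he.
by rewrite hed.
Qed.

Lemma forcers_SS k : forcers (@path_adj n.+1) (SS k) = if (k < n)%N then [set e k] else set0.
Proof.
apply/setP => u; rewrite !inE.
case Hu: (d u <= k)%N => /=; last first.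
  case: ifP => // Hk; rewrite ?inE //; apply/esym/negbTE; apply/eqP => E.
  by move: Hu; rewrite E he //; lia.
rewrite white_SS //.
case: (d u =P k) => [Eu|Nu] /=.
  case: ifP => Hk.
    subst k; rewrite inE hed eqxx.
    by rewrite (eq_finset (fun j => (d j == (d u).+1))) ?succ_set ?cards1 // => j /=; rewrite eqxx.
  rewrite inE; rewrite (eq_finset (fun j => false)) ?cards0 // => j.
  by apply/negbTE; have := hd j; lia.
rewrite (eq_finset (fun j => false)) ?cards0 //; case: ifP => // Hk; rewrite ?inE //.
by apply/esym/negbTE/eqP => E; apply: Nu; rewrite E he //; lia.
Qed.

Lemma sum_sub1 (T : finType) (F : {set T} -> R) (x : T) :
  \sum_(A : {set T} | A \subset [set x]) F A = F set0 + F [set x].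
Proof.
have Hne : (set0 : {set T}) != [set x].
  by apply/negP => /eqP/setP/(_ x); rewrite !inE eqxx.
rewrite (bigD1 [set x]) ?subxx //= (bigD1 set0) /=; last by rewrite sub0set.
rewrite big1 ?addr0; first by rewrite addrC.
move=> A; rewrite subset1 => /andP [/andP [/orP [/eqP ->|/eqP ->] ]].
  by rewrite eqxx.
by move=> _; rewrite eqxx.
Qed.

Lemma sum_sub0 (T : finType) (F : {set T} -> R) :
  \sum_(A : {set T} | A \subset set0) F A = F set0.
Proof. by rewrite (eq_bigl (pred1 set0)) ?big_pred1_eq // => A; rewrite subset0. Qed.

Lemma after_round0 (T : finType) (a : rel T) S : after_round a S set0 = S.
Proof.
apply/setP => v; rewrite !inE; apply/orb_idr => /existsP [u]; by rewrite inE.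
Qed.

Lemma after_round_SS k : (k < n)%N -> after_round (@path_adj n.+1) (SS k) [set e k] = SS k.+1.
Proof.
move=> Hk; apply/setP => v; rewrite !inE.
have -> : [exists u in [set e k], v \in white_nbrs (@path_adj n.+1) (SS k) u] =
          (v \in white_nbrs (@path_adj n.+1) (SS k) (e k)).
  apply/existsP/idP => [[u /andP [] ]|H]; first by rewrite inE => /eqP ->.
  by exists (e k); rewrite inE eqxx.
have hek : d (e k) = k by rewrite he //; lia.
rewrite white_SS ?hek // inE eqxx /=; lia.
Qed.

Lemma step_SS k S' : step_prob (@path_adj n.+1) (fun _ _ => p) (SS k) S' =
  if (k < n)%N then (S' == SS k)%:R * (1 - p) + (S' == SS k.+1)%:R * p
  else (S' == SS k)%:R.
Proof.
rewrite /step_prob forcers_SS; case: ifP => Hk.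
  rewrite sum_sub1 setD0 setDv after_round0 after_round_SS // !big_set0 !big_set1.
  have hek : d (e k) = k by rewrite he //; lia.
  rewrite white_SS ?hek // eqxx.
  rewrite (eq_finset (fun j => d j == k.+1)); last by move=> j /=; rewrite ?eqxx.
  rewrite succ_set // !big_set1; ring.
by rewrite sum_sub0 setD0 after_round0 !big_set0; ring.
Qed.


Hypothesis hn : (0 < n)%N.

Definition cc t k := if (k < n)%N then bb p t k else tl p n t.

Lemma sum_delta (F : nat -> R) (m j : nat) :
  \sum_(k < m) (j == k :> nat)%:R * F k = if (j < m)%N then F j else 0.
Proof.
elim: m => [|m IH]; first by rewrite big_ord0.
rewrite big_ord_recr /= IH.
case: (ltngtP j m) => H.
- have -> : (j < m.+1)%N by lia.
  case: (j =P m) => E; [lia| by rewrite mul0r addr0].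
- have -> : (j < m.+1)%N = false by lia.
  case: (j =P m) => E; [lia| by rewrite mul0r addr0].
- rewrite H ltnSn; case: (m =P m) => // _; by rewrite mul1r add0r.
Qed.

Notation adj := (@path_adj n.+1).
Notation w := (fun _ _ : 'I_n.+1 => p).

Lemma ordn (k : 'I_n.+1) : (k <= n)%N.
Proof. by rewrite -ltnS ltn_ord. Qed.

Lemma bdS B t S' : blue_dist adj w B t.+1 S' =
  \sum_(S : {set 'I_n.+1}) blue_dist adj w B t S * step_prob adj w S S'.
Proof. by []. Qed.

Lemma bd0 B S' : blue_dist adj w B 0 S' = (S' == B)%:R.
Proof. by []. Qed.

Lemma bd_inv t :
  (forall j, (j <= n)%N -> blue_dist adj w (SS 0) t (SS j) = cc t j) /\
  (forall S', (forall j, (j <= n)%N -> S' != SS j) -> blue_dist adj w (SS 0) t S' = 0).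
Proof.
elim: t => [|t [IH1 IH2]].
  split.
    move=> j hj; rewrite bd0 SS_inj //.
    rewrite /cc; case: j hj => [|j] hj.
      by rewrite hn /bb bin0 /= expr0 !mulr1.
    rewrite /= /bb; case: ifP => _.
      by rewrite bin0n mul0r mul0r.
    by rewrite /tl big_geq //.
  by move=> S' H; rewrite bd0 (negbTE (H 0%N _)).
have Esum : forall S', blue_dist adj w (SS 0) t.+1 S' =
     \sum_(k < n.+1) cc t k * step_prob adj w (SS k) S'.
  move=> S'; rewrite bdS.
  rewrite (bigID (fun S => S \in [set SS (val k) | k in 'I_n.+1])) /=.
  rewrite [X in _ + X]big1 ?addr0; last first.
    move=> S HS; rewrite IH2 ?mul0r // => j hj; apply/eqP => E; move: HS.
    rewrite E; move/negP; apply; apply/imsetP; exists (inord j) => //.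
    by rewrite inordK.
  rewrite big_imset; last first.
    move=> a b _ _ /eqP; rewrite SS_inj ?ordn // => /eqP; exact: val_inj.
  apply: eq_bigr => k _; by rewrite IH1 ?ordn.
split; last first.
  move=> S' H; rewrite Esum big1 // => k _.
  rewrite step_SS; case: ifP => hk.
    rewrite (negbTE (H k _)) ?ordn // (negbTE (H k.+1 hk)); by rewrite !mul0r addr0 mulr0.
  by rewrite (negbTE (H k (ordn k))) mulr0n mulr0.
move=> j hj; rewrite Esum.
rewrite (eq_bigr (fun k : 'I_n.+1 =>
   (j == k)%:R * (cc t k * (if (k < n)%N then 1 - p else 1)) +
   (j == k.+1)%:R * (if (k < n)%N then p * cc t k else 0))); last first.
  move=> k _; rewrite step_SS; case: ifP => hk.
    rewrite !SS_inj // ?ordn //; ring.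
  rewrite !SS_inj ?ordn //.
  have -> : (j == k.+1) = false by apply/negbTE; lia.
  ring.
rewrite big_split /= (sum_delta (fun k => cc t k * (if (k < n)%N then 1 - p else 1))).
rewrite ltnS hj.
case: j hj => [|j] hj.
  rewrite big1 ?addr0; last by move=> k _; rewrite mul0r.
  by rewrite hn /cc hn bb0 mulrC.
rewrite (eq_bigr (fun k : 'I_n.+1 => (j == k)%:R * (if (k < n)%N then p * cc t k else 0)));
  last by move=> k _; rewrite eqSS.
rewrite (sum_delta (fun k => if (k < n)%N then p * cc t k else 0)).
have hjn : (j < n)%N by lia.
have -> : (j < n.+1)%N by lia. rewrite hjn /cc hjn.
case: ifP => hj2.
  rewrite bbS; ring.
have -> : n = j.+1 by lia.
rewrite tl_step; ring.
Qed.

Lemma SS0 : SS 0 = [set e 0].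
Proof.
apply/setP => i; rewrite !inE leqn0; apply/eqP/eqP => [<-|->]; first by rewrite hed.
by rewrite he.
Qed.

Lemma prob_SS t : prob_ptw_le adj w [set e 0] t = tl p n t.
Proof.
have Etop : [set: 'I_n.+1] = SS n by rewrite SS_top.
rewrite /prob_ptw_le -SS0 Etop (proj1 (bd_inv t)) //.
by rewrite /cc ltnn.
Qed.

Lemma zf_SS k : zf_step adj (SS k) = SS k.+1.
Proof.
case: (ltnP k n) => hk; last first.
  rewrite (SS_top _ hk) (SS_top _ (leqW hk)); apply/setP => v; by rewrite !inE.
apply/setP => v; rewrite !inE.
have hek : d (e k) = k by rewrite he //; lia.
apply/idP/idP.
  case/orP => [H|]; first by lia.
  case/existsP => u /andP [Hu]; rewrite inE in Hu; rewrite white_SS //.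
  case: (d u =P k) => Eu /=.
    rewrite (eq_finset (fun j => d j == k.+1)); last by move=> j /=; rewrite ?Eu ?eqxx.
    rewrite succ_set // (inj_eq set1_inj) => /eqP <-; rewrite he //.
  rewrite (eq_finset (fun j => false)) // => /eqP/setP/(_ v); by rewrite !inE eqxx.
move=> H; case: (leqP (d v) k) => H2 //.
apply/existsP; exists (e k); rewrite inE hek leqnn /= white_SS ?hek //.
rewrite eqxx (eq_finset (fun j => d j == k.+1)) // succ_set //.
have -> : v = e k.+1 by rewrite -(hed v); congr e; lia.
by [].
Qed.

Lemma zfs_SS : zero_forcing_set adj [set e 0].
Proof.
rewrite /zero_forcing_set /zf_closure -SS0.
have : forall m, iter m (zf_step adj) (SS 0) = SS m.
  by elim=> [|m IH] //=; rewrite IH zf_SS.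
move=> ->; rewrite SS_top //.
by rewrite card_ord.
Qed.

End Chain.


Section Main.
Variable n : nat.
Hypothesis hn : (0 < n)%N.
Notation adj := (@path_adj n.+1).

Lemma zf_set0 : ~~ zero_forcing_set adj set0.
Proof.
rewrite /zero_forcing_set /zf_closure iter_fix.
  apply/negP => /eqP/setP/(_ ord0); by rewrite !inE.
apply/setP => x; rewrite !inE; apply/existsP => [[u]]; by rewrite inE.
Qed.

Lemma zf_interior (v : 'I_n.+1) : (0 < v < n)%N -> ~~ zero_forcing_set adj [set v].
Proof.
move=> /andP [h1 h2].
rewrite /zero_forcing_set /zf_closure iter_fix.
  apply/negP => /eqP E; have := congr1 (fun A : {set _} => #|A|) E; rewrite /= cards1 cardsT card_ord; lia.
apply/setP => x; rewrite !inE; apply/orb_idr => /existsP [u /andP [Hu /eqP E]].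
move: Hu; rewrite inE => /eqP Eu; subst u.
have ha : (inord v.-1 : 'I_n.+1) \in white_nbrs adj [set v] v.
  rewrite /white_nbrs !inE /path_adj inordK; last by lia.
  apply/andP; split; first by lia.
  apply/eqP => E2; have := congr1 (@nat_of_ord _) E2; rewrite inordK; [lia|lia].
have hb : (inord v.+1 : 'I_n.+1) \in white_nbrs adj [set v] v.
  rewrite /white_nbrs !inE /path_adj inordK; last by lia.
  apply/andP; split; first by lia.
  apply/eqP => E2; have := congr1 (@nat_of_ord _) E2; rewrite inordK; [lia|lia].
rewrite E !inE in ha hb.
move: ha hb => /eqP ha /eqP hb.
have := congr1 (@nat_of_ord _) (etrans ha (esym hb)); rewrite inordK; last lia.
rewrite inordK; [lia|lia].
Qed.

Definition d1 (i : 'I_n.+1) : nat := i.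
Definition e1 (k : nat) : 'I_n.+1 := inord k.
Definition d2 (i : 'I_n.+1) : nat := (n - i)%N.
Definition e2 (k : nat) : 'I_n.+1 := inord (n - k).

Lemma hd1 i : (d1 i <= n)%N. Proof. exact: (@ordn _ i). Qed.
Lemma he1 k : (k <= n)%N -> d1 (e1 k) = k. Proof. by move=> h; rewrite /d1 /e1 inordK. Qed.
Lemma hed1 i : e1 (d1 i) = i. Proof. exact: inord_val. Qed.
Lemma hadj1 i j : adj i j = ((d1 i).+1 == d1 j) || ((d1 j).+1 == d1 i). Proof. by []. Qed.

Lemma hd2 i : (d2 i <= n)%N. Proof. rewrite /d2; lia. Qed.
Lemma he2 k : (k <= n)%N -> d2 (e2 k) = k.
Proof. move=> h; rewrite /d2 /e2 inordK; lia. Qed.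
Lemma hed2 i : e2 (d2 i) = i.
Proof. apply: val_inj; rewrite /d2 /e2 /= inordK; have := @ordn _ i; lia. Qed.
Lemma hadj2 i j : adj i j = ((d2 i).+1 == d2 j) || ((d2 j).+1 == d2 i).
Proof. rewrite /d2 /path_adj; have := @ordn _ i; have := @ordn _ j; lia. Qed.

Lemma zfs1 : zero_forcing_set adj [set inord 0].
Proof. exact: (@zfs_SS n d1 e1 hd1 he1 hed1 hadj1). Qed.

Lemma card_Z B : zero_forcing_set adj B -> is_Z adj #|B| -> #|B| = 1%N.
Proof.
move=> hB [_ H].
have := H _ zfs1; rewrite cards1 => h1.
have : (0 < #|B|)%N.
  rewrite card_gt0; apply/negP => /eqP E; subst B; by move: (zf_set0) => /negP.
lia.
Qed.

Lemma isZ1 : is_Z adj 1.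
Proof.
split; first by exists [set inord 0]; rewrite zfs1 cards1.
move=> B hB; rewrite card_gt0; apply/negP => /eqP E; subst B; by move: (zf_set0) => /negP.
Qed.

Variable R : realFieldType.
Variable p : R.

Lemma prob_end B t : zero_forcing_set adj B -> is_Z adj #|B| ->
  prob_ptw_le adj (fun _ _ => p) B t = tl p n t.
Proof.
move=> hB hZ; have /eqP/cards1P [v Ev] := card_Z _ hB hZ; subst B.
case: (posnP v) => [v0|vpos].
  have -> : v = e1 0 by apply: ord_inj; rewrite /e1 inordK.
  exact: (@prob_SS R p n d1 e1 hd1 he1 hed1 hadj1 hn t).
case: (ltnP v n) => vn.
  have := zf_interior v; rewrite vpos vn hB; by move=> /(_ isT).
have -> : v = e2 0 by apply: ord_inj; rewrite /e2 inordK subn0 //; have := @ordn _ v; lia.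
exact: (@prob_SS R p n d2 e2 hd2 he2 hed2 hadj2 hn t). Qed.

End Main.

Theorem mainTheorem9 (R : realFieldType) (n : nat) (p alpha : R) :
  (2 <= n)%N -> 0 < p < 1 -> 0 < alpha < 1 ->
  forall t : nat,
    is_cptw (@path_adj n) (fun _ _ => p) alpha t <->
    (alpha <= \sum_(n.-1 <= s < t.+1) ('C(t, s)%:R * p ^+ s * (1 - p) ^+ (t - s)) /\
     forall m : nat, (m < t)%N ->
       \sum_(n.-1 <= s < m.+1) ('C(m, s)%:R * p ^+ s * (1 - p) ^+ (m - s)) < alpha).
Proof.
case: n => [|n] // hn2 _ _ t.
have hn : (0 < n)%N by [].
split.
  move=> [[B [hB [hZ [h1 h2]]]] _].
  rewrite (@prob_end n hn R p B t hB hZ) in h1.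
  split; first exact: h1.
  move=> m hm; have := h2 m hm; by rewrite (@prob_end n hn R p B m hB hZ).
have Z1 : is_Z (@path_adj n.+1) #|[set (inord 0 : 'I_n.+1)]| by rewrite cards1; exact: isZ1.
move=> [h1 h2]; split.
  exists [set inord 0]; split; first exact: zfs1.
  split; first exact: Z1.
  split; first by rewrite (@prob_end n hn R p _ t (zfs1 n hn) Z1).
  move=> m hm; rewrite (@prob_end n hn R p _ m (zfs1 n hn) Z1); exact: h2.
move=> B t' hB hZ [h3 _].
rewrite leqNgt; apply/negP => ht.
rewrite (@prob_end n hn R p B t' hB hZ) in h3.
have H := h2 t' ht; have := lt_le_trans H h3; by rewrite ltxx.
Qed.
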